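(* Let $r=r(n)\ge3$ and $m=m(n)$ be integers with $r=o(n^{1/2})$ and $\log(r^{-2}n)\le m=O(r^{-2}n)$. Then, as $n\to\infty$, \[ \frac{|\mathcal{H}^+_r(n,m)|}{|\mathcal{H}_r(n,m)|}=1-O\Bigl(\frac{r^6m^2}{n^3}\Bigr),\qquad \frac{|\mathcal{H}^{++}_r(n,m)|}{|\mathcal{H}_r(n,m)|}=1-O\Bigl(\frac{r^6m^2}{n^3}\Bigr). \]
   Context: $\mathcal{H}_r(n,m)$ is the set of $r$-uniform hypergraphs on $[n]$ with exactly $m$ edges. For such $H$, two edges are linked if they share exactly two vertices. Let $G_H$ be the graph whose vertices are the edges of $H$, two adjacent iff linked; a cluster of $H$ is the sub-hypergraph formed by the edges of a connected component of $G_H$ with at least two vertices. Set $M_0^*=\lceil\log(r^{-2}n)\rceil$, $M_0=M_0^*+2$, $M_4=\lceil\log(r^{-2}n)\rceil$ ($\log$ natural). $\mathcal{H}^+_r(n,m)$ is the set of $H\in\mathcal{H}_r(n,m)$ such that: (a) any two edges share at most two vertices; (b) every cluster consists of exactly two edges; (c) any two distinct clusters are vertex-disjoint; (d) there are at most $M_4$ clusters; (e) every vertex has degree at most $M_0$. $\mathcal{H}^{++}_r(n,m)$ is the subset of $\mathcal{H}^+_r(n,m)$ in which every vertex has degree at most $M_0^*$. *)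

(* Defs.v *)
From mathcomp Require Import all_boot.
From Stdlib Require Import Reals ZArith.

Set Implicit Arguments.
Unset Strict Implicit.
Unset Printing Implicit Defensive.

Section Hypergraphs.
Variable n : nat.

Definition hgraph := {set {set 'I_n}}.

Definition Hr (r m : nat) : {set hgraph} :=
  [set H : hgraph | [forall e in H, #|e| == r] && (#|H| == m)].

Definition linked (H : hgraph) : rel {set 'I_n} :=
  fun e f => [&& e \in H, f \in H, e != f & #|e :&: f| == 2].

Definition comp (H : hgraph) (e : {set 'I_n}) : {set {set 'I_n}} :=
  [set f | connect (linked H) e f].

Definition clusters (H : hgraph) : {set {set {set 'I_n}}} :=
  [set comp H e | e in H & 1 < #|comp H e|].

Definition vset (C : {set {set 'I_n}}) : {set 'I_n} := \bigcup_(e in C) e.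

Definition degree (H : hgraph) (v : 'I_n) : nat := #|[set e in H | v \in e]|.

(* conditions (a)-(e), with degree bound Mdeg and cluster-number bound Mcl *)
Definition good (Mdeg Mcl : nat) (H : hgraph) : bool :=
  [&& [forall e in H, forall f in H, (e != f) ==> (#|e :&: f| <= 2)],
      [forall C in clusters H, #|C| == 2],
      [forall C in clusters H, forall D in clusters H,
          (C != D) ==> [disjoint vset C & vset D]],
      #|clusters H| <= Mcl &
      [forall v, degree H v <= Mdeg]].

Definition card_H (r m : nat) : nat := #|Hr r m|.
Definition card_Hgood (r m Mdeg Mcl : nat) : nat :=
  #|[set H in Hr r m | good Mdeg Mcl H]|.

End Hypergraphs.

Local Open Scope R_scope.

(* ceiling of a real number: ceil x = 1 - up(-x) (up y is the least integer > y) *)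
Definition Rceil (x : R) : Z := (1 - up (- x))%Z.

(* ceil(log(r^-2 n)) with natural log; truncated at 0 (only relevant when n < r^2) *)
Definition ceil_log (n r : nat) : nat :=
  Z.to_nat (Rceil (ln (INR n / (INR r ^ 2)))).

Definition M0star (n r : nat) : nat := ceil_log n r.
Definition M0 (n r : nat) : nat := (ceil_log n r + 2)%nat.
Definition M4 (n r : nat) : nat := ceil_log n r.

Definition card_Hplus (n r m : nat) : nat := card_Hgood n r m (M0 n r) (M4 n r).
Definition card_Hplusplus (n r m : nat) : nat :=
  card_Hgood n r m (M0star n r) (M4 n r).

(* Main.v *)
Require Import Defs.
From Stdlib Require Import Reals.
From Stdlib Require Import Lra Lia ZArith.

Local Open Scope R_scope.
Ltac ff := field; repeat split; try (intro; lra).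


Lemma exp_le_mono x y : x <= y -> exp x <= exp y.
Proof. intros [h|h]; [left; apply exp_increasing; auto | subst; lra]. Qed.

Lemma exp_INR k : exp (INR k) = exp 1 ^ k.
Proof.
induction k as [|k IH]; simpl; [rewrite exp_0; reflexivity|].
rewrite <- IH, <- exp_plus; f_equal; destruct k; simpl; lra.
Qed.

Lemma Rceil_ge z : z <= IZR (Rceil z).
Proof.
unfold Rceil; rewrite minus_IZR; destruct (archimed (- z)) as [_ h]; lra.
Qed.

Lemma IZR_le_to_nat z : IZR z <= INR (Z.to_nat z).
Proof.
destruct (Z_le_gt_dec 0 z) as [h|h].
- rewrite INR_IZR_INZ, Z2Nat.id; [lra| lia].
- apply Rle_trans with 0; [apply IZR_le; lia| apply pos_INR].
Qed.

Lemma ceil_log_ge n r : ln (INR n / INR r ^ 2) <= INR (ceil_log n r).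
Proof.
unfold ceil_log; eapply Rle_trans; [apply Rceil_ge| apply IZR_le_to_nat].
Qed.

Lemma ceil_log_pos n r : 0 < ln (INR n / INR r ^ 2) -> (1 <= ceil_log n r)%nat.
Proof.
intro h; unfold ceil_log.
assert (h2 : 0 < IZR (Rceil (ln (INR n / INR r ^ 2)))) by (eapply Rlt_le_trans; [exact h| apply Rceil_ge]).
apply lt_0_IZR in h2; lia.
Qed.

Lemma ceil_log_exp n r : 0 < INR n / INR r ^ 2 ->
  INR n / INR r ^ 2 <= exp 1 ^ ceil_log n r.
Proof.
intro h; rewrite <- exp_INR.
apply Rle_trans with (exp (ln (INR n / INR r ^ 2))); [rewrite exp_ln; [lra| exact h]|].
apply exp_le_mono, ceil_log_ge.
Qed.

Lemma fact_bound z : 0 <= z -> exists C, 0 < C /\ forall j, z ^ j <= C * INR (fact j).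
Proof.
intro hz.
destruct (archimed z) as [ha _].
set (J := Z.to_nat (up z)).
assert (hJ : z <= INR J) by (apply Rle_trans with (IZR (up z)); [lra| apply IZR_le_to_nat]).
set (b := Rmax 1 z).
assert (hb1 : 1 <= b) by apply Rmax_l.
assert (hbz : z <= b) by apply Rmax_r.
assert (hbJ : 1 <= b ^ J) by (apply Rle_trans with (b ^ 0); [simpl; lra| apply Rle_pow; [lra| lia]]).
exists (b ^ J); split; [apply pow_lt; lra|].
assert (hf : forall j, 1 <= INR (fact j)).
{ intro j; apply (le_INR 1); pose proof (lt_O_fact j); lia. }
induction j as [|j IH].
- simpl; lra.
- destruct (le_lt_dec (S j) J) as [hj|hj].
  + apply Rle_trans with (b ^ S j); [apply pow_incr; lra|].
    apply Rle_trans with (b ^ J); [apply Rle_pow; auto|].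
    specialize (hf (S j)); pose proof (pow_le b J ltac:(lra)); nra.
  + rewrite fact_simpl, mult_INR.
    assert (h1 : z <= INR (S j)) by (apply Rle_trans with (INR J); [auto| apply le_INR; lia]).
    pose proof (pow_le z j hz); pose proof (pos_INR (fact j)).
    pose proof (pow_le b J ltac:(lra)).
    replace (z ^ S j) with (z * z ^ j) by reflexivity.
    replace (b ^ J * (INR (S j) * INR (fact j))) with (INR (S j) * (b ^ J * INR (fact j))) by ring.
    apply Rmult_le_compat; auto.
Qed.


Section Terms.
Variables NN Nn R M : R.
Hypotheses (hNN : 0 < NN) (hNn : 0 < Nn) (hR : 1 <= R) (hM : 0 <= M).
Let tau := R ^ 6 * M ^ 2 / Nn ^ 3.
Let y := M * R ^ 2 / Nn.

Lemma aux_nonneg_div a b : 0 <= a -> 0 < b -> 0 <= a / b.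
Proof. intros; apply Rmult_le_pos; [lra| left; apply Rinv_0_lt_compat; lra]. Qed.

Lemma termA jA c3 x3 : jA <= NN * (c3 * x3) -> 0 <= c3 <= R ^ 3 -> 0 <= x3 ->
  x3 * Nn ^ 3 <= NN * R ^ 3 -> jA * (M / NN) ^ 2 <= tau.
Proof.
intros h1 h2 h3 h4.
assert (hu : 0 <= (M / NN) ^ 2) by (apply pow_le, aux_nonneg_div; lra).
apply Rle_trans with (NN * (c3 * x3) * (M / NN) ^ 2); [apply Rmult_le_compat_r; auto|].
assert (hN3 : 0 < Nn ^ 3) by (apply pow_lt; lra).
assert (hw : 0 <= M ^ 2 / (NN * Nn ^ 3)) by (apply aux_nonneg_div; [apply pow_le; lra| apply Rmult_lt_0_compat; lra]).
replace (NN * (c3 * x3) * (M / NN) ^ 2) with (c3 * (x3 * Nn ^ 3) * (M ^ 2 / (NN * Nn ^ 3))) by ff.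
apply Rle_trans with (R ^ 3 * (NN * R ^ 3) * (M ^ 2 / (NN * Nn ^ 3))).
- apply Rmult_le_compat_r; auto; apply Rmult_le_compat; try lra.
  apply Rmult_le_pos; [auto| apply pow_le; lra].
- unfold tau; right; ff.
Qed.

Lemma termP jP c2 x2 : jP <= NN * (c2 * x2) * (c2 * x2) -> 0 <= c2 <= R ^ 2 -> 0 <= x2 ->
  x2 * Nn ^ 2 <= NN * R ^ 2 -> jP * (M / NN) ^ 3 <= tau * y.
Proof.
intros h1 h2 h3 h4.
assert (hu : 0 <= (M / NN) ^ 3) by (apply pow_le, aux_nonneg_div; lra).
apply Rle_trans with (NN * (c2 * x2) * (c2 * x2) * (M / NN) ^ 3); [apply Rmult_le_compat_r; auto|].
assert (hN2 : 0 < Nn ^ 2) by (apply pow_lt; lra).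
assert (hw : 0 <= M ^ 3 / (NN * NN * Nn ^ 4)).
{ apply aux_nonneg_div; [apply pow_le; lra|]. replace (NN * NN * Nn ^ 4) with (NN * NN * (Nn ^ 2 * Nn ^ 2)) by ring.
  repeat apply Rmult_lt_0_compat; lra. }
replace (NN * (c2 * x2) * (c2 * x2) * (M / NN) ^ 3) with
  ((c2 * (x2 * Nn ^ 2)) * (c2 * (x2 * Nn ^ 2)) * (M ^ 3 / (NN * NN * Nn ^ 4))) by ff.
assert (hc : 0 <= c2 * (x2 * Nn ^ 2)) by (apply Rmult_le_pos; [lra| apply Rmult_le_pos; lra]).
assert (hc' : c2 * (x2 * Nn ^ 2) <= R ^ 2 * (NN * R ^ 2)) by (apply Rmult_le_compat; try lra; apply Rmult_le_pos; lra).
apply Rle_trans with ((R ^ 2 * (NN * R ^ 2)) * (R ^ 2 * (NN * R ^ 2)) * (M ^ 3 / (NN * NN * Nn ^ 4))).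
- apply Rmult_le_compat_r; auto; apply Rmult_le_compat; auto.
- unfold tau, y; right; ff.
Qed.

Lemma termQ jQ c2 x2 x1 : jQ <= NN * (c2 * x2) * (R * x1 * (c2 * x2)) -> 0 <= c2 <= R ^ 2 -> 0 <= x2 ->
  x2 * Nn ^ 2 <= NN * R ^ 2 -> 0 <= x1 -> x1 * Nn <= NN * R -> jQ * (M / NN) ^ 4 <= tau * y ^ 2.
Proof.
intros h1 h2 h3 h4 h5 h6.
assert (hu : 0 <= (M / NN) ^ 4) by (apply pow_le, aux_nonneg_div; lra).
apply Rle_trans with (NN * (c2 * x2) * (R * x1 * (c2 * x2)) * (M / NN) ^ 4); [apply Rmult_le_compat_r; auto|].
assert (hN2 : 0 < Nn ^ 2) by (apply pow_lt; lra).
assert (hw : 0 <= R * M ^ 4 / (NN * NN * NN * Nn ^ 5)).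
{ apply aux_nonneg_div; [apply Rmult_le_pos; [lra| apply pow_le; lra]|].
  replace (NN * NN * NN * Nn ^ 5) with (NN * NN * NN * (Nn ^ 2 * Nn ^ 2 * Nn)) by ring.
  repeat apply Rmult_lt_0_compat; lra. }
replace (NN * (c2 * x2) * (R * x1 * (c2 * x2)) * (M / NN) ^ 4) with
  ((c2 * (x2 * Nn ^ 2)) * (c2 * (x2 * Nn ^ 2)) * (x1 * Nn) * (R * M ^ 4 / (NN * NN * NN * Nn ^ 5))) by ff.
assert (hc : 0 <= c2 * (x2 * Nn ^ 2)) by (apply Rmult_le_pos; [lra| apply Rmult_le_pos; lra]).
assert (hc' : c2 * (x2 * Nn ^ 2) <= R ^ 2 * (NN * R ^ 2)) by (apply Rmult_le_compat; try lra; apply Rmult_le_pos; lra).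
assert (hx : 0 <= x1 * Nn) by (apply Rmult_le_pos; lra).
apply Rle_trans with ((R ^ 2 * (NN * R ^ 2)) * (R ^ 2 * (NN * R ^ 2)) * (NN * R) * (R * M ^ 4 / (NN * NN * NN * Nn ^ 5))).
- apply Rmult_le_compat_r; auto; apply Rmult_le_compat; auto.
  + apply Rmult_le_pos; auto.
  + apply Rmult_le_compat; auto.
- unfold tau, y; right; ff.
Qed.

Lemma termD jD c2 x2 k F : 0 < F -> jD * F <= (NN * (c2 * x2)) ^ (S k) -> 0 <= c2 <= R ^ 2 -> 0 <= x2 ->
  x2 * Nn ^ 2 <= NN * R ^ 2 -> jD * (M / NN) ^ (S k * 2) * F <= (y ^ 2) ^ (S k).
Proof.
intros hF h1 h2 h3 h4.
assert (hu : 0 <= (M / NN) ^ (S k * 2)) by (apply pow_le, aux_nonneg_div; lra).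
replace (jD * (M / NN) ^ (S k * 2) * F) with ((jD * F) * ((M / NN) ^ 2) ^ (S k)) by (rewrite <- pow_mult, Nat.mul_comm; ring).
assert (hu2 : 0 <= (M / NN) ^ 2) by (apply pow_le, aux_nonneg_div; lra).
apply Rle_trans with ((NN * (c2 * x2)) ^ (S k) * ((M / NN) ^ 2) ^ (S k)); [apply Rmult_le_compat_r; [apply pow_le; auto| auto]|].
rewrite <- Rpow_mult_distr; apply pow_incr; split.
- apply Rmult_le_pos; [|auto]; apply Rmult_le_pos; [lra| apply Rmult_le_pos; lra].
- assert (hN2 : 0 < Nn ^ 2) by (apply pow_lt; lra).
  replace (NN * (c2 * x2) * (M / NN) ^ 2) with (c2 * (x2 * Nn ^ 2) * (M ^ 2 / (NN * Nn ^ 2))) by ff.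
  apply Rle_trans with (R ^ 2 * (NN * R ^ 2) * (M ^ 2 / (NN * Nn ^ 2))).
  + apply Rmult_le_compat_r; [apply aux_nonneg_div; [apply pow_le; lra| apply Rmult_lt_0_compat; lra]|].
    apply Rmult_le_compat; try lra; apply Rmult_le_pos; lra.
  + unfold y; right; ff.
Qed.

Lemma termE jE x1 k F : 0 < F -> jE * F <= Nn * x1 ^ (S k) -> 0 <= x1 -> x1 * Nn = NN * R ->
  jE * (M / NN) ^ (S k) * F <= Nn * (R * M / Nn) ^ (S k).
Proof.
intros hF h1 h2 h3.
assert (hu : 0 <= (M / NN) ^ (S k)) by (apply pow_le, aux_nonneg_div; lra).
replace (jE * (M / NN) ^ (S k) * F) with ((jE * F) * (M / NN) ^ (S k)) by ring.
apply Rle_trans with (Nn * x1 ^ (S k) * (M / NN) ^ (S k)); [apply Rmult_le_compat_r; auto|].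
rewrite Rmult_assoc, <- Rpow_mult_distr; right; f_equal; f_equal.
assert (x1 = NN * R / Nn) by (apply (Rmult_eq_reg_r Nn); [rewrite h3; field|]; lra).
subst x1; ff.
Qed.

End Terms.


Lemma fact_mono k : INR (fact k) <= INR (fact (S k)).
Proof. apply le_INR; rewrite fact_simpl; pose proof (lt_O_fact k); nia. Qed.

Lemma asympt K : 0 <= K -> exists CD CE, 0 <= CD /\ 0 <= CE /\
  forall (k : nat) x y w Rr F, (1 <= k)%nat -> 0 < x -> x <= exp 1 ^ k -> 0 <= y <= K ->
  0 <= w <= K -> 0 < Rr -> F = INR (fact (S k)) ->
  (y ^ 2) ^ (S k) <= CD * (y ^ 2 / x) * F /\
  x * Rr ^ 2 * w ^ (S k) <= CE * ((Rr * w) ^ 2 / x) * F.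
Proof.
intro hK.
assert (he : 0 < exp 1) by apply exp_pos.
destruct (fact_bound (exp 1 * K ^ 2)) as [CD [hCD hD]].
{ apply Rmult_le_pos; [lra| apply pow_le; lra]. }
destruct (fact_bound (exp 1 ^ 2 * (K + 1))) as [CE [hCE hE]].
{ apply Rmult_le_pos; [apply pow_le; lra| lra]. }
exists CD, CE; split; [lra| split; [lra|]].
intros k x y w Rr F hk hx hxe hy hw hR hF.
assert (hF0 : 0 < F) by (subst F; apply lt_0_INR, lt_O_fact).
assert (hfk : INR (fact k) <= F) by (subst F; apply fact_mono).
split.
- assert (key : x * (K ^ 2) ^ k <= CD * F).
  { apply Rle_trans with (exp 1 ^ k * (K ^ 2) ^ k).
    - apply Rmult_le_compat_r; [apply pow_le, pow_le; lra| auto].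
    - rewrite <- Rpow_mult_distr; apply Rle_trans with (CD * INR (fact k)); auto.
      apply Rmult_le_compat_l; lra. }
  assert (hy2 : 0 <= y ^ 2) by (apply pow_le; lra).
  assert (hyk : (y ^ 2) ^ k <= (K ^ 2) ^ k) by (apply pow_incr; split; [auto| apply pow_incr; lra]).
  replace ((y ^ 2) ^ S k) with (y ^ 2 * (y ^ 2) ^ k) by reflexivity.
  replace (CD * (y ^ 2 / x) * F) with (y ^ 2 * ((CD * F) / x)) by ff.
  apply Rmult_le_compat_l; auto.
  apply Rle_trans with ((K ^ 2) ^ k); auto.
  apply (Rmult_le_reg_l x); auto.
  replace (x * (CD * F / x)) with (CD * F) by ff; auto.
- destruct k as [|k]; [lia|].
  assert (hw2 : 0 <= w ^ 2) by (apply pow_le; lra).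
  assert (hwk : w ^ k <= (K + 1) ^ S k).
  { apply Rle_trans with ((K + 1) ^ k); [apply pow_incr; lra|].
    apply Rle_pow; [lra| lia]. }
  assert (hx2 : x ^ 2 <= (exp 1 ^ 2) ^ S k).
  { rewrite <- pow_mult, Nat.mul_comm, pow_mult; apply pow_incr; lra. }
  assert (key : x ^ 2 * w ^ k <= CE * F).
  { apply Rle_trans with ((exp 1 ^ 2) ^ S k * (K + 1) ^ S k).
    - apply Rmult_le_compat; auto; [apply pow_le; lra| apply pow_le; lra].
    - rewrite <- Rpow_mult_distr; apply Rle_trans with (CE * INR (fact (S k))); auto.
      apply Rmult_le_compat_l; lra. }
  replace (x * Rr ^ 2 * w ^ S (S k)) with ((Rr ^ 2 * w ^ 2 / x) * (x ^ 2 * w ^ k)) by (simpl; ff).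
  replace (CE * ((Rr * w) ^ 2 / x) * F) with ((Rr ^ 2 * w ^ 2 / x) * (CE * F)) by ff.
  apply Rmult_le_compat_l; auto.
  apply aux_nonneg_div; auto; apply Rmult_le_pos; auto; apply pow_le; lra.
Qed.

Close Scope R_scope.

From mathcomp Require Import all_boot zify.
Set Implicit Arguments. Unset Strict Implicit. Unset Printing Implicit Defensive.


Lemma union_bound (T I : finType) (A : {set T}) (J : {set I}) (B : I -> {set T}) :
  (forall x, x \in A -> exists2 i, i \in J & x \in B i) ->
  #|A| <= \sum_(i in J) #|B i|.
Proof.
move=> H; rewrite -sum1_card.
apply: (@leq_trans (\sum_(x in A) \sum_(i in J) (x \in B i))).
  apply: leq_sum => x xA; case: (H x xA) => i iJ xB.
  by rewrite (bigD1 i) //= xB.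
rewrite exchange_big; apply: leq_sum => i _.
apply: (@leq_trans (\sum_x (x \in B i))).
  by rewrite [X in _ <= X](bigID (fun x => x \in A)) /= leq_addr.
rewrite -sum1_card [X in _ <= X]big_mkcond /=; apply: eq_leq; apply: eq_bigr => x _; by case: (x \in B i).
Qed.

Lemma pick_subset (T : finType) (A : {set T}) t :
  t <= #|A| -> exists2 S : {set T}, S \subset A & #|S| = t.
Proof.
elim: t => [|t IH] ht; first by exists (set0 : {set T}); rewrite ?sub0set ?cards0.
case: (IH (ltnW ht)) => S SA cS.
have : 0 < #|A :\: S| by rewrite cardsD (setIidPr SA) cS subn_gt0.
case/card_gt0P => x; rewrite inE => /andP [xS xA].
exists (x |: S); first by rewrite subUset sub1set xA.
by rewrite cardsU1 xS cS.
Qed.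

Lemma pair_count (T1 T2 : finType) (P : pred T1) (R : T1 -> pred T2) b :
  (forall x, P x -> #|[set y | R x y]| <= b) ->
  #|[set p : T1 * T2 | P p.1 && R p.1 p.2]| <= #|[set x | P x]| * b.
Proof.
move=> H; rewrite -sum1_card.
have -> : \sum_(p in [set p : T1 * T2 | P p.1 && R p.1 p.2]) 1 =
          \sum_(x | P x) \sum_(y | R x y) 1.
  rewrite pair_big_dep; apply: eq_bigl => p; by rewrite inE.
rewrite -sum_nat_const; rewrite [X in _ <= X](eq_bigl P); last by move=> x; rewrite inE.
apply: leq_sum => x Px; apply: leq_trans (H x Px); rewrite -sum1_card; apply: eq_leq; apply: eq_bigl => y; by rewrite inE.
Qed.


Lemma leq_pow_base a b e : a <= b -> a ^ e <= b ^ e.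
Proof. by move=> h; elim: e => [|e IH] //; rewrite !expnS leq_mul. Qed.

Definition Pj N m j := if (j <= m) && (m <= N) then 'C(N - j, m - j) else 0.

Lemma Pj_bound j : forall N m, Pj N m j * N ^ j <= 'C(N, m) * m ^ j.
Proof.
rewrite /Pj; elim: j => [|j IH] N m; first by rewrite leq0n /=; case: ifP; rewrite ?leq0n // !subn0 !expn0.
case: leqP => jm //=; case: m jm => // m jm; rewrite ltnS in jm.
case: N => [|N]; first by rewrite exp0n // muln0.
rewrite !subSS ltnS.
case: (leqP m N) => mN //=.
have IHj := IH N m; rewrite jm mN /= in IHj.
have key : 'C(N - j, m - j) * N.+1 ^ j <= 'C(N, m) * m.+1 ^ j.
  case: N mN IHj => [|N] mN IHj.
    have m0 : m = 0 by apply/eqP; rewrite -leqn0.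
    subst m; have j0 : j = 0 by apply/eqP; rewrite -leqn0.
    by subst j.
  rewrite -(@leq_pmul2r (N.+1 ^ j)) ?expn_gt0 //.
  apply: (@leq_trans ('C(N.+1, m) * m ^ j * N.+2 ^ j)).
    by rewrite mulnAC leq_mul2r IHj orbT.
  rewrite -!mulnA leq_mul2l -!expnMn; apply/orP; right.
  apply: leq_pow_base; nia.
have dg := mul_bin_diag N.+1 m; rewrite /= in dg.
rewrite !expnS.
apply: (@leq_trans (N.+1 * ('C(N,m) * m.+1^j))).
  by rewrite mulnCA leq_mul2l key orbT.
by rewrite mulnA dg [m.+1 * _]mulnC -mulnA.
Qed.

Section Hyp.
Variable n : nat.
Notation E := {set 'I_n}.
Definition Er r : {set E} := [set e : E | #|e| == r].

Lemma card_Er r : #|Er r| = 'C(n, r).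
Proof. by rewrite /Er card_draws card_ord. Qed.

Lemma HrE r m : Hr n r m = [set H : {set E} | H \subset Er r & #|H| == m].
Proof.
apply/setP => H; rewrite !inE; congr andb.
apply/forallP/subsetP => h e; first by move=> eH; have := h e; rewrite eH inE.
by apply/implyP => eH; have := h e eH; rewrite inE.
Qed.

Lemma card_Hr r m : #|Hr n r m| = 'C('C(n, r), m).
Proof. by rewrite HrE cards_draws card_Er. Qed.

Lemma Hr_sub r m H e : H \in Hr n r m -> e \in H -> #|e| = r.
Proof. by rewrite HrE inE => /andP [/subsetP h _] /h; rewrite inE => /eqP. Qed.

Lemma card_contain r m (S : {set E}) j :
  S \subset Er r -> #|S| = j ->
  #|[set H in Hr n r m | S \subset H]| <= Pj 'C(n, r) m j.
Proof.
move=> SE cS; rewrite /Pj.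
case: ifP => [/andP [jm mN] | hc].
  set D := [set A : {set E} | A \subset Er r :\: S & #|A| == m - j].
  have cD : #|D| = 'C('C(n, r) - j, m - j).
    by rewrite cards_draws cardsD (setIidPr SE) card_Er cS.
  apply: (@leq_trans #|[set H :\: S | H in [set H in Hr n r m | S \subset H]]|).
    rewrite card_in_imset //.
    move=> H1 H2; rewrite !inE => /andP [_ S1] /andP [_ S2] eq12.
    by rewrite -(setID H1 S) -(setID H2 S) (setIidPr S1) (setIidPr S2) eq12.
  rewrite -cD; apply: subset_leq_card; apply/subsetP => A /imsetP [H].
  rewrite inE HrE inE => /andP [/andP [HE cH] SH] ->.
  rewrite inE; apply/andP; split; first by apply: setSD.
  by rewrite cardsD (setIidPr SH) (eqP cH) cS.
rewrite leqn0 cards_eq0 HrE; apply/eqP/setP => H; rewrite !inE.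
apply/negbTE; apply/negP => /andP [/andP [HE /eqP cH] SH].
move/negbT: hc; rewrite negb_and -!ltnNge => /orP [] h.
  by have := subset_leq_card SH; rewrite cS cH leqNgt h.
by have := subset_leq_card HE; rewrite card_Er cH leqNgt h.
Qed.
End Hyp.


Lemma connect_fwd (T : finType) (R : rel T) (a : pred T) x y :
  (forall u v, a u -> R u v -> a v) -> a x -> connect R x y -> a y.
Proof.
move=> h ax /connectP [p pth ->]; elim: p x ax pth => [|z p IH] x ax //=.
by case/andP => Rxz pz; apply: IH pz; apply: h Rxz.
Qed.

Section Graph.
Variable n : nat.
Notation E := {set 'I_n}.
Variable H : hgraph n.

Lemma linked_sym : symmetric (linked H).
Proof. by move=> e f; rewrite /linked eq_sym setIC; case: (e \in H); case: (f \in H). Qed.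

Lemma comp_mem e x : (x \in Defs.comp H e) = connect (linked H) e x.
Proof. by rewrite inE. Qed.

Lemma comp_self e : e \in Defs.comp H e.
Proof. by rewrite comp_mem connect0. Qed.

Lemma comp_eq e x : x \in Defs.comp H e -> Defs.comp H x = Defs.comp H e.
Proof.
rewrite comp_mem => cx; apply/setP => y; rewrite !comp_mem.
by rewrite (same_connect (sym_connect_sym linked_sym) cx).
Qed.

Lemma comp_in_H e x : e \in H -> x \in Defs.comp H e -> x \in H.
Proof.
rewrite comp_mem => eH; apply: (@connect_fwd _ _ (fun u => u \in H)) => //.
by move=> u v _ /and4P [].
Qed.

Lemma comp_neighbor e : 1 < #|Defs.comp H e| -> exists f, linked H e f.
Proof.
move=> c2.
have : 0 < #|Defs.comp H e :\ e| by rewrite (cardsD1 e) comp_self in c2.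
case/card_gt0P => f; rewrite !inE => /andP [fe /connectP [p pth fl]].
case: p pth fl => [|z p] /=; first by move=> _ fl; rewrite fl eqxx in fe.
by case/andP => ez _ _; exists z.
Qed.

Definition noP2 := forall e f g, linked H e f -> linked H f g -> e = g.

Lemma comp_sub2 e g : noP2 -> linked H e g -> Defs.comp H e \subset [set e; g].
Proof.
move=> np leg; apply/subsetP => x; rewrite comp_mem.
apply: (@connect_fwd _ _ (fun u => u \in [set e; g])); last by rewrite !inE eqxx.
move=> u v; rewrite !inE => /orP [] /eqP -> luv.
  have := np v e g; rewrite linked_sym luv leg => /(_ isT isT) ->; by rewrite eqxx orbT.
by rewrite (np e g v leg luv) eqxx.
Qed.

Lemma cluster_form C : noP2 -> C \in clusters H ->
  exists e g, linked H e g /\ C = [set e; g].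
Proof.
move=> np /imsetP [e0]; rewrite inE => /andP [e0H c2] ->.
case: (comp_neighbor c2) => g lg; exists e0, g; split => //.
apply/eqP; rewrite eqEcard comp_sub2 //= cards2.
by move: lg => /and4P [_ _ -> _].
Qed.

Lemma cluster_comp C x : C \in clusters H -> x \in C -> C = Defs.comp H x.
Proof. by case/imsetP => e0 _ -> xc; rewrite (comp_eq xc). Qed.

Lemma clusters_disj C D x : C \in clusters H -> D \in clusters H ->
  x \in C -> x \in D -> C = D.
Proof. by move=> cC cD xC xD; rewrite (cluster_comp cC xC) (cluster_comp cD xD). Qed.

Lemma cluster_sub C : C \in clusters H -> C \subset H.
Proof.
case/imsetP => e0; rewrite inE => /andP [e0H _] ->; apply/subsetP => x.
exact: comp_in_H.
Qed.

End Graph.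


Section Count.
Variable n : nat.
Notation E := {set 'I_n}.

Lemma card_superset r (S : E) :
  #|[set f : E | (#|f| == r) && (S \subset f)]| <= 'C(n - #|S|, r - #|S|).
Proof.
set D := [set A : E | A \subset ~: S & #|A| == r - #|S|].
have cD : #|D| = 'C(n - #|S|, r - #|S|).
  by rewrite cards_draws (cardsCs (~: S)) setCK card_ord.
apply: (@leq_trans #|[set f :\: S | f in [set f : E | (#|f| == r) && (S \subset f)]]|).
  rewrite card_in_imset //.
  move=> f1 f2; rewrite !inE => /andP [_ S1] /andP [_ S2] eq12.
  by rewrite -(setID f1 S) -(setID f2 S) (setIidPr S1) (setIidPr S2) eq12.
rewrite -cD; apply: subset_leq_card; apply/subsetP => A /imsetP [f].
rewrite inE => /andP [/eqP cf Sf] ->.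
rewrite inE; apply/andP; split; first by rewrite setDE subsetIr.
by rewrite cardsD (setIidPr Sf) cf.
Qed.

Lemma card_meet r t (e : E) : #|e| = r ->
  #|[set f : E | (#|f| == r) && (t <= #|e :&: f|)]| <= 'C(r, t) * 'C(n - t, r - t).
Proof.
move=> ce.
set J := [set S : E | S \subset e & #|S| == t].
apply: (@leq_trans (\sum_(S in J) #|[set f : E | (#|f| == r) && (S \subset f)]|)).
  apply: union_bound => f; rewrite inE => /andP [cf tf].
  case: (pick_subset tf) => S Ssub cS; exists S.
    by rewrite inE cS eqxx andbT (subset_trans Ssub) ?subsetIl.
  by rewrite inE cf (subset_trans Ssub) ?subsetIr.
rewrite -ce -(cards_draws e t) -sum_nat_const; apply: leq_sum => S.
by rewrite inE => /andP [_ /eqP <-]; apply: card_superset.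
Qed.

Lemma config_bound (I : finType) (J : {set I}) (phi : I -> {set E}) r m j :
  (forall i, i \in J -> phi i \subset Er n r /\ #|phi i| = j) ->
  #|[set H in Hr n r m | [exists i in J, phi i \subset H]]| <= #|J| * Pj 'C(n, r) m j.
Proof.
move=> hJ.
apply: (@leq_trans (\sum_(i in J) #|[set H in Hr n r m | phi i \subset H]|)).
  apply: union_bound => H; rewrite inE => /andP [HH /existsP [i /andP [iJ sH]]].
  by exists i => //; rewrite inE HH.
rewrite -sum_nat_const; apply: leq_sum => i iJ.
by case: (hJ i iJ) => s c; apply: card_contain.
Qed.

End Count.


Section Families.
Variables n r k : nat.
Notation E := {set 'I_n}.
Notation Er := (Er n r).
Notation N := 'C(n, r).
Definition b1 := r * 'C(n - 1, r - 1).
Definition b2 := 'C(r, 2) * 'C(n - 2, r - 2).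
Definition b3 := 'C(r, 3) * 'C(n - 3, r - 3).

Definition PL : {set E * E} :=
  [set q : E * E | [&& q.1 \in Er, q.2 \in Er, q.1 != q.2 & #|q.1 :&: q.2| == 2]].

Lemma meet_count t e : e \in Er ->
  #|[set f : E | (#|f| == r) && (t <= #|e :&: f|)]| <= 'C(r, t) * 'C(n - t, r - t).
Proof. by rewrite inE => /eqP ce; apply: card_meet. Qed.

Lemma card_Er_le : #|[set x | x \in Er]| = N.
Proof. by rewrite -card_Er; apply: eq_card => x; rewrite inE. Qed.

Lemma card_PL : #|PL| <= N * b2.
Proof.
rewrite -card_Er_le.
apply: (@leq_trans #|[set q : E * E | (q.1 \in Er) &&
   [&& q.2 \in Er, q.1 != q.2 & #|q.1 :&: q.2| == 2]]|).
  by apply: eq_leq; apply: eq_card => q; rewrite !inE.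
apply: (pair_count (P := fun x => x \in Er)
   (R := fun x y => [&& y \in Er, x != y & #|x :&: y| == 2])) => e eE.
apply: leq_trans (meet_count 2 eE).
apply: subset_leq_card; apply/subsetP => f; rewrite !inE => /and3P [/eqP -> _ /eqP ->].
by rewrite eqxx.
Qed.

Definition JA : {set E * E} :=
  [set q : E * E | (q.1 \in Er) && [&& q.2 \in Er, q.1 != q.2 & 3 <= #|q.1 :&: q.2|]].

Lemma card_JA : #|JA| <= N * b3.
Proof.
rewrite -card_Er_le; apply: (pair_count (P := fun x => x \in Er)
   (R := fun x y => [&& y \in Er, x != y & 3 <= #|x :&: y|])) => e eE.
apply: leq_trans (meet_count 3 eE).
apply: subset_leq_card; apply/subsetP => f; rewrite !inE => /and3P [/eqP -> _ ->].
by rewrite eqxx.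
Qed.

Definition JP : {set (E * E) * E} :=
  [set p : (E * E) * E | (p.1 \in PL) &&
     [&& p.2 \in Er, p.2 != p.1.1, p.2 != p.1.2 & #|p.1.2 :&: p.2| == 2]].

Lemma card_JP : #|JP| <= N * b2 * b2.
Proof.
apply: (@leq_trans (#|[set x | x \in PL]| * b2)).
  apply: (pair_count (P := fun x => x \in PL)
   (R := fun x y => [&& y \in Er, y != x.1, y != x.2 & #|x.2 :&: y| == 2])) => q.
  rewrite inE => /and4P [_ q2E _ _].
  apply: leq_trans (meet_count 2 q2E).
  apply: subset_leq_card; apply/subsetP => f; rewrite !inE => /and4P [/eqP -> _ _ /eqP ->].
  by rewrite eqxx.
rewrite leq_mul2r; apply/orP; right; apply: leq_trans card_PL.
by apply: eq_leq; apply: eq_card => x; rewrite inE.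
Qed.

Definition JQ : {set (E * E) * (E * E)} :=
  [set p : (E * E) * (E * E) | (p.1 \in PL) &&
     [&& p.2 \in PL, p.2.1 != p.1.1, p.2.1 != p.1.2, p.2.2 != p.1.1,
         p.2.2 != p.1.2 & ~~ [disjoint p.1.1 & p.2.1]]].

Lemma card_JQ : #|JQ| <= N * b2 * (b1 * b2).
Proof.
apply: (@leq_trans (#|[set x | x \in PL]| * (b1 * b2))).
  apply: (pair_count (P := fun x => x \in PL)
   (R := fun x y => [&& y \in PL, y.1 != x.1, y.1 != x.2, y.2 != x.1,
         y.2 != x.2 & ~~ [disjoint x.1 & y.1]])) => q.
  rewrite inE => /and4P [q1E _ _ _].
  apply: (@leq_trans #|[set q2 : E * E | (q2.1 \in [set f : E | (#|f| == r) && (1 <= #|q.1 :&: f|)])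
       && [&& q2.2 \in Er, q2.1 != q2.2 & #|q2.1 :&: q2.2| == 2]]|).
    apply: subset_leq_card; apply/subsetP => q2; rewrite !inE.
    case/and3P => /and4P [/eqP -> -> -> ->] _ /and4P [_ _ _ dj].
    by rewrite eqxx /= card_gt0 setI_eq0 dj.
  apply: (@leq_trans (#|[set x : E | x \in [set f : E | (#|f| == r) && (1 <= #|q.1 :&: f|)]]| * b2)).
    apply: (pair_count (P := fun x => x \in [set f : E | (#|f| == r) && (1 <= #|q.1 :&: f|)])
      (R := fun x y => [&& y \in Er, x != y & #|x :&: y| == 2])) => f.
    rewrite inE => /andP [/eqP cf _].
    have fE : f \in Er by rewrite inE cf.
    apply: leq_trans (meet_count 2 fE).
    apply: subset_leq_card; apply/subsetP => g; rewrite !inE => /and3P [/eqP -> _ /eqP ->].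
    by rewrite eqxx.
  rewrite leq_mul2r; apply/orP; right.
  apply: (@leq_trans ('C(r,1) * 'C(n - 1, r - 1))); last by rewrite bin1.
  apply: leq_trans (meet_count 1 q1E).
  by apply: eq_leq; apply: eq_card => x; rewrite inE.
rewrite leq_mul2r; apply/orP; right; apply: leq_trans card_PL.
by apply: eq_leq; apply: eq_card => x; rewrite inE.
Qed.

Definition L : {set {set E}} := [set [set q.1; q.2] | q in PL].

Definition JD : {set {set {set E}}} :=
  [set Cl : {set {set E}} | [&& Cl \subset L, #|Cl| == k.+1 & trivIset Cl]].

Lemma card_JD : #|JD| <= 'C(N * b2, k.+1).
Proof.
apply: (@leq_trans #|[set Cl : {set {set E}} | Cl \subset L & #|Cl| == k.+1]|).
  apply: subset_leq_card; apply/subsetP => Cl; rewrite !inE => /and3P [-> -> _] //.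
rewrite cards_draws; apply: leq_bin2l; apply: leq_trans card_PL.
exact: leq_imset_card.
Qed.

Definition star (v : 'I_n) : {set E} := [set f : E | (#|f| == r) && ([set v] \subset f)].

Definition JE : {set 'I_n * {set E}} :=
  [set p : 'I_n * {set E} | true && ((p.2 \subset star p.1) && (#|p.2| == k.+1))].

Lemma card_JE : #|JE| <= n * 'C('C(n - 1, r - 1), k.+1).
Proof.
apply: (@leq_trans (#|[set x : 'I_n | true]| * 'C('C(n - 1, r - 1), k.+1))); last first.
  by rewrite -[X in X <= _]/(#|[set: 'I_n]| * _) cardsT card_ord.
rewrite /JE; apply: (pair_count (P := fun x : 'I_n => true)
   (R := fun x (y : {set E}) => (y \subset star x) && (#|y| == k.+1))) => v _.
rewrite cards_draws; apply: leq_bin2l.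
by have := card_superset r [set v]; rewrite cards1.
Qed.

End Families.


Lemma card3 (T : finType) (a b c : T) : a != b -> a != c -> b != c ->
  #|[set a; b; c]| = 3.
Proof.
move=> ab ac bc; rewrite setUC cardsU1 cards2 ab !inE.
by rewrite !(eq_sym c) (negbTE ac) (negbTE bc).
Qed.

Lemma card4 (T : finType) (a b c d : T) : a != b -> a != c -> a != d ->
  b != c -> b != d -> c != d -> #|[set a; b; c; d]| = 4.
Proof.
move=> ab ac ad bc bd cd; rewrite setUC cardsU1 card3 // !inE.
by rewrite !(eq_sym d) (negbTE ad) (negbTE bd) (negbTE cd).
Qed.

Lemma exists_contra (I : finType) (J : {set I}) (P : pred I) i :
  ~~ [exists i in J, P i] -> i \in J -> P i -> False.
Proof. by move=> h iJ Pi; move/negP: h; apply; apply/existsP; exists i; rewrite iJ. Qed.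

Lemma not_disj (T : finType) (A B : {set T}) :
  ~~ [disjoint A & B] -> exists2 x, x \in A & x \in B.
Proof. by rewrite -setI_eq0 => /set0Pn [x]; rewrite inE => /andP [] ; exists x. Qed.

Lemma disjI (T : finType) (A B : {set T}) :
  (forall x, x \in A -> x \in B -> False) -> [disjoint A & B].
Proof.
move=> h; rewrite -setI_eq0; apply/eqP/setP => x; rewrite !inE.
by apply/negbTE/negP => /andP [xA xB]; apply: (h x).
Qed.

Section Struct.
Variables n r m k : nat.
Notation E := {set 'I_n}.

Definition phiA (q : E * E) : {set E} := [set q.1; q.2].
Definition phiP (p : (E * E) * E) : {set E} := [set p.1.1; p.1.2; p.2].
Definition phiQ (p : (E * E) * (E * E)) : {set E} := [set p.1.1; p.1.2; p.2.1; p.2.2].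
Definition phiE (p : 'I_n * {set E}) : {set E} := p.2.

Lemma JA_ok q : q \in JA n r -> phiA q \subset Er n r /\ #|phiA q| = 2.
Proof.
rewrite inE => /and4P [q1 q2 ne _]; split; last by rewrite cards2 ne.
by apply/subsetP => x; rewrite !inE => /orP [] /eqP ->; rewrite -?(inE _ (Er n r)) ?q1 ?q2 //;
  move: q1 q2; rewrite !inE.
Qed.

Lemma PL_ok q : q \in PL n r -> [/\ q.1 \in Er n r, q.2 \in Er n r, q.1 != q.2 & #|q.1 :&: q.2| = 2].
Proof. by rewrite inE => /and4P [a b c /eqP d]. Qed.

Lemma JP_ok p : p \in JP n r -> phiP p \subset Er n r /\ #|phiP p| = 3.
Proof.
rewrite inE => /andP [/PL_ok [a b c _] /and4P [d e f _]].
split; first by rewrite !subUset !sub1set a b d.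
by rewrite card3 // eq_sym.
Qed.

Lemma JQ_ok p : p \in JQ n r -> phiQ p \subset Er n r /\ #|phiQ p| = 4.
Proof.
rewrite inE => /andP [/PL_ok [a b c _] /and5P [/PL_ok [a' b' c' _] d e f /andP [g _]]].
split; first by rewrite !subUset !sub1set a b a' b'.
by rewrite card4 // eq_sym.
Qed.

Lemma L_ok C : C \in L n r -> C \subset Er n r /\ #|C| = 2.
Proof.
case/imsetP => q /PL_ok [a b c _] ->; split; first by rewrite !subUset !sub1set a b.
by rewrite cards2 c.
Qed.

Lemma JD_ok Cl : Cl \in JD n r k -> cover Cl \subset Er n r /\ #|cover Cl| = k.+1 * 2.
Proof.
rewrite inE => /and3P [sL /eqP cCl tr]; split.
  apply/subsetP => x /bigcupP [C CCl xC].
  by have [/subsetP h _] := L_ok (subsetP sL C CCl); apply: h.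
rewrite -(eqP tr) -cCl -sum_nat_const; apply: eq_bigr => C CCl.
by have [_ ->] := L_ok (subsetP sL C CCl).
Qed.

Lemma JE_ok p : p \in JE n r k -> phiE p \subset Er n r /\ #|phiE p| = k.+1.
Proof.
rewrite inE /phiE /= => /andP [sS /eqP ->]; split => //.
apply: subset_trans sS _; apply/subsetP => f; rewrite !inE => /andP [-> _] //.
Qed.

End Struct.


Section Bad.
Variables n r m k : nat.
Notation E := {set 'I_n}.

Lemma bad_cases (H : hgraph n) : H \in Hr n r m -> ~~ good k k H ->
  [|| [exists i in JA n r, phiA i \subset H], [exists i in JP n r, phiP i \subset H],
      [exists i in JQ n r, phiQ i \subset H], [exists i in JD n r k, cover i \subset H]
    | [exists i in JE n r k, phiE i \subset H]].
Proof.
move=> HH; apply: contraR; rewrite !negb_or => /and5P [nA nP nQ nD nE].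
have inEr e : e \in H -> e \in Er n r by move=> eH; rewrite inE (Hr_sub HH eH).
have lk e f : linked H e f -> [/\ e \in H, f \in H, e != f & #|e :&: f| = 2].
  by case/and4P => a b c /eqP.
have PLof e f : linked H e f -> (e, f) \in PL n r.
  by move/lk => [a b c d]; rewrite inE /= !inEr // c d eqxx.
have np : noP2 H.
  move=> e f g lef lfg; apply/eqP; apply/negPn/negP => neg.
  apply: (exists_contra nP (i := ((e,f),g))).
    rewrite inE /= PLof //; case: (lk _ _ lfg) => _ gH fg c.
    by rewrite inEr // c eqxx (eq_sym g e) neg (eq_sym g f) fg.
  rewrite /phiP /= !subUset !sub1set.
  by case: (lk _ _ lef) => -> -> _ _; case: (lk _ _ lfg) => _ -> _ _.
have partner C a : C \in clusters H -> a \in C -> exists a', linked H a a' /\ a' \in C.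
  move=> cC; case: (cluster_form np cC) => e [g [leg ->]].
  case/set2P => ->; [exists g | exists e]; rewrite !inE eqxx ?orbT; split => //.
  by rewrite linked_sym.
rewrite /good; apply/and5P; split.
- apply/forallP => e; apply/implyP => eH; apply/forallP => f; apply/implyP => fH.
  apply/implyP => nef; rewrite leqNgt; apply/negP => h3.
  apply: (exists_contra nA (i := (e,f))); first by rewrite inE /= !inEr //= nef h3.
  by rewrite /phiA /= subUset !sub1set eH fH.
- apply/forallP => C; apply/implyP => cC.
  case: (cluster_form np cC) => e [g [leg ->]].
  by rewrite cards2; case: (lk _ _ leg) => _ _ -> _.
- apply/forallP => C; apply/implyP => cC; apply/forallP => D; apply/implyP => cD.
  apply/implyP => nCD.
  apply: disjI => v /bigcupP [a aC va] /bigcupP [b bD vb].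
  case: (partner C a cC aC) => a' [laa' a'C].
  case: (partner D b cD bD) => b' [lbb' b'D].
  have nd x y : x \in C -> y \in D -> x != y.
    move=> xC yD; apply/eqP => exy; subst y.
    by move/negP: nCD; apply; rewrite (clusters_disj cC cD xC yD).
  apply: (exists_contra nQ (i := ((a,a'),(b,b')))).
    rewrite inE /= !PLof // (eq_sym b a) nd // (eq_sym b a') nd //.
    rewrite (eq_sym b' a) nd // (eq_sym b' a') nd //=.
    apply/negP => dj; rewrite -setI_eq0 in dj.
    have : v \in a :&: b by rewrite inE va vb.
    by rewrite (eqP dj) inE.
  rewrite /phiQ /= !subUset !sub1set.
  by case: (lk _ _ laa') => -> -> _ _; case: (lk _ _ lbb') => -> -> _ _.
- rewrite leqNgt; apply/negP => hk; case: (pick_subset hk) => Cl sCl cCl.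
  apply: (exists_contra nD (i := Cl)).
    rewrite inE cCl eqxx /=; apply/andP; split.
      apply/subsetP => C CCl; have cC := subsetP sCl C CCl.
      case: (cluster_form np cC) => e [g [leg ->]].
      by rewrite /L; apply/imsetP; exists (e, g) => //; apply: PLof.
    apply/trivIsetP => A B AC BC nAB; apply: disjI => x xA xB.
    move/negP: nAB; apply; apply/eqP.
    exact: (clusters_disj (subsetP sCl _ AC) (subsetP sCl _ BC) xA xB).
  apply/subsetP => x /bigcupP [C CCl xC].
  exact: (subsetP (cluster_sub (subsetP sCl _ CCl))).
- apply/forallP => v; rewrite leqNgt; apply/negP => hk.
  rewrite /degree in hk; case: (pick_subset hk) => S sS cS.
  apply: (exists_contra nE (i := (v,S))).
    rewrite inE /= cS eqxx andbT; apply/subsetP => e eS.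
    have := subsetP sS e eS; rewrite !inE => /andP [eH ve].
    by rewrite (Hr_sub HH eH) eqxx sub1set.
  rewrite /phiE /=; apply: subset_trans sS _; apply/subsetP => e.
  by rewrite inE => /andP [].
Qed.

End Bad.


Lemma cardU_le (T : finType) (A B : {set T}) : #|A :|: B| <= #|A| + #|B|.
Proof. by rewrite cardsU leq_subr. Qed.

Section Final.
Variables n r m k : nat.
Notation N := 'C(n, r).

Lemma bad_bound :
  #|[set H in Hr n r m | ~~ good k k H]| <=
  #|JA n r| * Pj N m 2 + #|JP n r| * Pj N m 3 + #|JQ n r| * Pj N m 4
  + #|JD n r k| * Pj N m (k.+1 * 2) + #|JE n r k| * Pj N m k.+1.
Proof.
set S1 := [set H in Hr n r m | [exists i in JA n r, phiA i \subset H]].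
set S2 := [set H in Hr n r m | [exists i in JP n r, phiP i \subset H]].
set S3 := [set H in Hr n r m | [exists i in JQ n r, phiQ i \subset H]].
set S4 := [set H in Hr n r m | [exists i in JD n r k, cover i \subset H]].
set S5 := [set H in Hr n r m | [exists i in JE n r k, phiE i \subset H]].
apply: (@leq_trans #|S1 :|: S2 :|: S3 :|: S4 :|: S5|).
  apply: subset_leq_card; apply/subsetP => H; rewrite inE => /andP [HH ng].
  have := bad_cases HH ng; rewrite !in_setU.
  case/orP => [h|/orP [h|/orP [h|/orP [h|h]]]]; [have : H \in S1 | have : H \in S2 | have : H \in S3 | have : H \in S4 |
    have : H \in S5]; try (by rewrite inE HH h); by move=> ->; rewrite ?orbT.
apply: leq_trans; first exact: cardU_le.
apply: leq_add; last by rewrite /S5; apply: config_bound => i; exact: JE_ok.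
apply: leq_trans; first exact: cardU_le.
apply: leq_add; last by rewrite /S4; apply: config_bound => i; exact: JD_ok.
apply: leq_trans; first exact: cardU_le.
apply: leq_add; last by rewrite /S3; apply: config_bound => i; exact: JQ_ok.
apply: leq_trans; first exact: cardU_le.
apply: leq_add; last by rewrite /S2; apply: config_bound => i; exact: JP_ok.
by rewrite /S1; apply: config_bound => i; exact: JA_ok.
Qed.

Lemma good_mono a a' b (H : hgraph n) : a <= a' -> good a b H -> good a' b H.
Proof.
move=> aa /and5P [h1 h2 h3 h4 /forallP h5]; apply/and5P; split => //.
by apply/forallP => v; apply: leq_trans (h5 v) aa.
Qed.

End Final.

Local Open Scope R_scope.

Lemma INR_muln a b : INR (a * b) = INR a * INR b.
Proof. by rewrite mulnE mult_INR. Qed.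

Lemma INR_expn a b : INR (a ^ b) = INR a ^ b.
Proof. elim: b => [|b IH]; first by rewrite expn0. by rewrite expnS INR_muln IH. Qed.

Lemma factorialE j : (j`! = Factorial.fact j)%N.
Proof. elim: j => [|j IH] //; by rewrite factS IH /= mulnE. Qed.

Lemma ffact_le a j : (a ^_ j <= a ^ j)%N.
Proof.
elim: j a => [|j IH] a; first by rewrite ffactn0 expn0.
rewrite ffactnS expnS leq_mul2l; apply/orP; right.
apply: leq_trans (IH _) _; apply: leq_pow_base; exact: leq_pred.
Qed.

Lemma bin_fact_le a j : ('C(a, j) * j`! <= a ^ j)%N.
Proof. by rewrite bin_ffact ffact_le. Qed.

Lemma bin_le_pow a j : ('C(a, j) <= a ^ j)%N.
Proof.
apply: leq_trans (bin_fact_le a j); rewrite -{1}(muln1 'C(a, j)) leq_mul2l fact_gt0 orbT //.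
Qed.

Lemma ratio_bound n r t : (t <= r)%N -> (r <= n)%N -> ('C(n - t, r - t) * n ^ t <= 'C(n, r) * r ^ t)%N.
Proof. by move=> tr rn; have := Pj_bound t n r; rewrite /Pj tr rn. Qed.

Lemma diag1 n r : (1 <= r)%N -> ('C(n - 1, r - 1) * n = 'C(n, r) * r)%N.
Proof.
case: r => [|r] // _; rewrite subn1 /= subn1 mulnC.
by rewrite mul_bin_diag mulnC.
Qed.

Lemma lower_N n r : (2 <= r)%N -> (r <= n)%N -> (n * (n - 1) <= 'C(n, r) * r ^ 2)%N.
Proof.
move=> r2 rn.
have h1 := diag1 n (ltnW r2).
have r1 : (1 <= r - 1)%N by lia.
have h2 := diag1 (n - 1) r1.
have h3 : (0 < 'C(n - 1 - 1, r - 1 - 1))%N by rewrite bin_gt0; lia.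
have : (n * (n - 1) * 'C(n - 1 - 1, r - 1 - 1) = 'C(n, r) * (r * (r - 1)))%N.
  by rewrite mulnA -h1 mulnAC -mulnA h2; lia.
move=> h4; apply: (@leq_trans ('C(n, r) * (r * (r - 1)))%N); last first.
  by rewrite leq_mul2l expnS expn1 leq_mul2l leq_subr !orbT.
by rewrite -h4; apply: leq_pmulr.
Qed.

Lemma INR_leq a b : (a <= b)%N -> INR a <= INR b.
Proof. by move/leP; apply: le_INR. Qed.

Lemma Pj_real N m j : (0 < N)%N ->
  INR (Pj N m j) <= INR 'C(N, m) * (INR m / INR N) ^ j.
Proof.
move=> N0; have h := INR_leq (Pj_bound j N m); rewrite !INR_muln !INR_expn in h.
have hN : 0 < INR N by apply: lt_0_INR; apply/ltP.
have hNj : 0 < INR N ^ j by apply: pow_lt.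
apply: (Rmult_le_reg_r (INR N ^ j)) => //.
rewrite Rmult_assoc -Rpow_mult_distr.
have -> : INR m / INR N * INR N = INR m by field; lra.
exact: h.
Qed.

Section PerN.
Variables n r m k : nat.
Hypotheses (r3 : (3 <= r)%N) (rn : (r <= n)%N).

Let T := INR #|Hr n r m|.
Let B := INR #|[set H in Hr n r m | ~~ good k k H]|.
Let Rr := INR r.
Let Nn := INR n.
Let M := INR m.
Let NN := INR 'C(n, r).
Let F := INR (Factorial.fact (S k)).
Let tau := Rr ^ 6 * M ^ 2 / Nn ^ 3.
Let y := M * Rr ^ 2 / Nn.

Lemma per_n : B <= T * (tau + tau * y + tau * y ^ 2 + (y ^ 2) ^ (S k) / F
                        + Nn * (Rr * M / Nn) ^ (S k) / F).
Proof.
have N0 : (0 < 'C(n, r))%N by rewrite bin_gt0.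
have hNN : 0 < NN by apply: lt_0_INR; apply/ltP.
have hNn : 0 < Nn by apply: lt_0_INR; apply/ltP; lia.
have hR : 1 <= Rr by rewrite /Rr -/(INR 1); apply: INR_leq; lia.
have hM : 0 <= M by apply: pos_INR.
have hF : 0 < F by apply: lt_0_INR; apply: Factorial.lt_O_fact.
have hT : T = INR 'C('C(n, r), m) by rewrite /T card_Hr.
have PjR j : INR (Pj 'C(n, r) m j) <= T * (M / NN) ^ j by rewrite hT; apply: Pj_real.
set u := M / NN.
have hu : 0 <= u by apply: aux_nonneg_div.
have hb := INR_leq (bad_bound n r m k).
rewrite !plus_INR !INR_muln in hb.
have hJ j (J : nat) : INR J * INR (Pj 'C(n, r) m j) <= INR J * (T * u ^ j).
  by apply: Rmult_le_compat_l; [apply: pos_INR | apply: PjR].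
set jA := INR #|JA n r|; set jP := INR #|JP n r|; set jQ := INR #|JQ n r|.
set jD := INR #|JD n r k|; set jE := INR #|JE n r k|.
have hB : B <= T * (jA * u ^ 2 + jP * u ^ 3 + jQ * u ^ 4 + jD * u ^ (S k * 2) + jE * u ^ (S k)).
  apply: (Rle_trans _ _ _ hb).
  have := hJ 2%N #|JA n r|; have := hJ 3%N #|JP n r|; have := hJ 4%N #|JQ n r|.
  have := hJ (k.+1 * 2)%N #|JD n r k|; have := hJ k.+1 #|JE n r k|.
  rewrite -/jA -/jP -/jQ -/jD -/jE => h5 h4 h3 h2 h1; lra.
apply: (Rle_trans _ _ _ hB).
have hT0 : 0 <= T by apply: pos_INR.
apply: Rmult_le_compat_l => //.
set c2 := INR 'C(r, 2); set c3 := INR 'C(r, 3).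
set x1 := INR 'C(n - 1, r - 1); set x2 := INR 'C(n - 2, r - 2); set x3 := INR 'C(n - 3, r - 3).
have hc2 : 0 <= c2 <= Rr ^ 2 by split; [apply: pos_INR | rewrite /c2 /Rr -INR_expn; apply: INR_leq; apply: bin_le_pow].
have hc3 : 0 <= c3 <= Rr ^ 3 by split; [apply: pos_INR | rewrite /c3 /Rr -INR_expn; apply: INR_leq; apply: bin_le_pow].
have hx1 : 0 <= x1 by apply: pos_INR.
have hx2 : 0 <= x2 by apply: pos_INR.
have hx3 : 0 <= x3 by apply: pos_INR.
have ex1 : x1 * Nn = NN * Rr by rewrite /x1 /Nn /NN /Rr -!INR_muln diag1 //; lia.
have ex2 : x2 * Nn ^ 2 <= NN * Rr ^ 2.
  by rewrite /x2 /Nn /NN /Rr -!INR_expn -!INR_muln; apply: INR_leq; apply: ratio_bound => //; lia.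
have ex3 : x3 * Nn ^ 3 <= NN * Rr ^ 3.
  by rewrite /x3 /Nn /NN /Rr -!INR_expn -!INR_muln; apply: INR_leq; apply: ratio_bound.
have tA : jA * u ^ 2 <= tau.
  apply: (@termA NN Nn Rr M hNN hNn hM jA c3 x3) => //.
  by rewrite /jA /NN /c3 /x3 -!INR_muln; apply: INR_leq; apply: card_JA.
have tP : jP * u ^ 3 <= tau * y.
  apply: (@termP NN Nn Rr M hNN hNn hM jP c2 x2) => //.
  by rewrite /jP /NN /c2 /x2 -!INR_muln; apply: INR_leq; apply: card_JP.
have tQ : jQ * u ^ 4 <= tau * y ^ 2.
  apply: (@termQ NN Nn Rr M hNN hNn hR hM jQ c2 x2 x1) => //; last by rewrite ex1; lra.
  by rewrite /jQ /NN /c2 /x2 /x1 /Rr -!INR_muln; apply: INR_leq; apply: card_JQ.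
have tD : jD * u ^ (S k * 2) * F <= (y ^ 2) ^ (S k).
  apply: (@termD NN Nn Rr M hNN hNn hM jD c2 x2 k F hF) => //.
  rewrite /jD /F /NN /c2 /x2 -!INR_muln -INR_expn -factorialE; apply: INR_leq.
  apply: leq_trans (bin_fact_le _ _); rewrite leq_mul2r; apply/orP; right.
  exact: card_JD.
have tE : jE * u ^ (S k) * F <= Nn * (Rr * M / Nn) ^ (S k).
  apply: (@termE NN Nn Rr M hNN hNn hM jE x1 k F hF) => //.
  rewrite /jE /F /Nn /x1 -INR_expn -factorialE -!INR_muln; apply: INR_leq.
  apply: (@leq_trans (n * 'C('C(n - 1, r - 1), k.+1) * k.+1`!)%N).
    by rewrite leq_mul2r; apply/orP; right; apply: card_JE.
  by rewrite -mulnA leq_mul2l bin_fact_le orbT.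
have tD' : jD * u ^ (S k * 2) <= (y ^ 2) ^ (S k) / F.
  apply: (Rmult_le_reg_r F) => //.
  have -> : (y ^ 2) ^ S k / F * F = (y ^ 2) ^ S k by field; lra.
  exact: tD.
have tE' : jE * u ^ (S k) <= Nn * (Rr * M / Nn) ^ (S k) / F.
  apply: (Rmult_le_reg_r F) => //.
  have -> : Nn * (Rr * M / Nn) ^ (S k) / F * F = Nn * (Rr * M / Nn) ^ (S k) by field; lra.
  exact: tE.
lra.
Qed.

End PerN.

Lemma card_split (T : finType) (A : {set T}) (P : pred T) :
  (#|[set x in A | P x]| + #|[set x in A | ~~ P x]| = #|A|)%N.
Proof.
rewrite -(cardsID [set x | P x] A); congr (_ + _)%N; apply: eq_card => x; rewrite !inE //.
by rewrite andbC.
Qed.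

Lemma ratio_facts n r m : (r <= n)%N -> (m <= 'C(n, r))%N ->
  let k := ceil_log n r in
  let T := INR (card_H n r m) in
  let B := INR #|[set H in Hr n r m | ~~ good k k H]| in
  0 < T /\ INR (card_Hplusplus n r m) = T - B /\
  T - B <= INR (card_Hplus n r m) <= T.
Proof.
move=> rn mN k T B.
have hT : 0 < T by rewrite /T /card_H card_Hr; apply: lt_0_INR; apply/ltP; rewrite bin_gt0.
have hs := card_split (Hr n r m) (good k k).
have e1 : INR (card_Hplusplus n r m) = T - B.
  rewrite /T /B /card_H -hs plus_INR /card_Hplusplus /card_Hgood /M0star /M4 -/k; lra.
split => //; split => //; rewrite -e1; split.
  apply: INR_leq; apply: subset_leq_card; apply/subsetP => H.
  rewrite /M0star /M4 /M0 -/k !inE => /andP [-> g] /=.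
  by apply: good_mono g; apply: leq_addr.
rewrite /T /card_H /card_Hplus /card_Hgood; apply: INR_leq; apply: subset_leq_card.
by apply/subsetP => H; rewrite inE => /andP [].
Qed.


Lemma abs_ratio T P Bb X : 0 < T -> T - Bb <= P <= T -> Bb <= T * X ->
  Rabs (P / T - 1) <= X.
Proof.
move=> hT [h1 h2] h3.
have e : P / T - 1 = (P - T) / T by field; lra.
rewrite e Rabs_left1.
  have -> : - ((P - T) / T) = (T - P) / T by field; lra.
  apply: (Rmult_le_reg_r T) => //.
  have -> : (T - P) / T * T = T - P by field; lra.
  lra.
have h4 : 0 <= (T - P) / T by apply: aux_nonneg_div; lra.
have -> : (P - T) / T = - ((T - P) / T) by field; lra.
lra.
Qed.

Lemma nat_above (z : R) : exists N : nat, z <= INR N.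
Proof.
exists (Z.to_nat (up z)); apply: Rle_trans (IZR_le_to_nat _).
by have [h _] := archimed z; lra.
Qed.

Notation "n <= m" := (le n m) : nat_scope.

Theorem theorem7p2 (r m : nat -> nat)
  (hr3 : forall n, (3 <= r n)%nat)
  (hro : forall eps, 0 < eps -> exists N, forall n, (N <= n)%nat ->
           INR (r n) <= eps * sqrt (INR n))
  (hmlow : forall n, ln (INR n / INR (r n) ^ 2) <= INR (m n))
  (hmup : exists K, exists N, forall n, (N <= n)%nat ->
           INR (m n) <= K * (INR n / INR (r n) ^ 2)) :
  exists C, exists N, forall n, (N <= n)%nat ->
    Rabs (INR (card_Hplus n (r n) (m n)) / INR (card_H n (r n) (m n)) - 1)
      <= C * (INR (r n) ^ 6 * INR (m n) ^ 2 / INR n ^ 3) /\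
    Rabs (INR (card_Hplusplus n (r n) (m n)) / INR (card_H n (r n) (m n)) - 1)
      <= C * (INR (r n) ^ 6 * INR (m n) ^ 2 / INR n ^ 3).
Proof.
case: hmup => K [N1 hK].
set K' := Rabs K.
have hK' : 0 <= K' by apply: Rabs_pos.
case: (asympt K' hK') => CD [CE [hCD [hCE hA]]].
have h2 : 0 < / 2 by lra.
case: (hro _ h2) => N2 hN2.
case: (nat_above (K' + 1)) => N3 hN3.
exists (1 + K' + K' ^ 2 + CD + CE), (Nat.max N1 (Nat.max N2 N3)).
move=> n hn.
have hn1 : (N1 <= n)%nat by lia.
have hn2 : (N2 <= n)%nat by lia.
have hn3 : (N3 <= n)%nat by lia.
set rr := r n; set mm := m n.
set Rr := INR rr; set Nn := INR n; set M := INR mm.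
have hR3 : 3 <= Rr by rewrite /Rr; have := le_INR _ _ (hr3 n); rewrite /rr; simpl; lra.
have hM : 0 <= M by apply: pos_INR.
have hNn0 : 0 <= Nn by apply: pos_INR.
have hRs := hN2 n hn2; rewrite -/rr -/Rr -/Nn in hRs.
have hR2 : Rr ^ 2 <= Nn / 4.
  have hs : 0 <= sqrt Nn by apply: sqrt_pos.
  have hss : sqrt Nn * sqrt Nn = Nn by apply: sqrt_sqrt.
  have : Rr * Rr <= (/ 2 * sqrt Nn) * (/ 2 * sqrt Nn) by apply: Rmult_le_compat; lra.
  simpl; nra.
have hNn : 0 < Nn by nra.
have rn : leq rr n.
  apply/leP; apply: INR_le; rewrite -/Rr -/Nn; simpl in hR2; nra.
set x := Nn / Rr ^ 2.
have hRp : 0 < Rr ^ 2 by apply: pow_lt; lra.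
have hx4 : 4 <= x.
  rewrite /x; apply: (Rmult_le_reg_r (Rr ^ 2)) => //.
  have -> : Nn / Rr ^ 2 * Rr ^ 2 = Nn by field; lra.
  lra.
have hMK : M <= K' * x.
  have := hK n hn1; rewrite -/rr -/mm -/Rr -/Nn -/M -/x => h.
  apply: Rle_trans h _; apply: Rmult_le_compat_r; [lra | apply: Rle_abs].
set y := M * Rr ^ 2 / Nn.
have hy0 : 0 <= y by apply: aux_nonneg_div => //; apply: Rmult_le_pos => //; lra.
have hx0 : 0 < x by lra.
have hyK : y <= K'.
  apply: (Rmult_le_reg_r x) => //.
  have -> : y * x = M by rewrite /y /x; field; lra.
  lra.
set w := Rr * M / Nn.
have hRpos : 0 < Rr by lra.
have hwy : Rr * w = y by rewrite /w /y; field; lra.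
have hw0 : 0 <= w by apply: aux_nonneg_div => //; apply: Rmult_le_pos; lra.
have hw : 0 <= w <= K' by split => //; nra.
set NN := INR 'C(n, rr).
have r2 : leq 2 rr by apply/leP; have := hr3 n; rewrite /rr; lia.
have lowN := INR_leq (lower_N r2 rn).
have n1 : (1 <= n)%nat by apply: INR_le; rewrite -/Nn; simpl; simpl in hR2; nra.
rewrite !INR_muln minus_INR // -/Nn -/NN -/Rr /= in lowN.
have hNK : K' <= Nn - 1.
  have := le_INR _ _ hn3; rewrite -/Nn; lra.
have hMR : M * Rr ^ 2 <= K' * Nn.
  have -> : K' * Nn = K' * x * Rr ^ 2 by rewrite /x; field; lra.
  apply: Rmult_le_compat_r => //; lra.
have mN : leq mm 'C(n, rr).
  apply/leP; apply: INR_le; rewrite -/M -/NN.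
  apply: (Rmult_le_reg_r (Rr ^ 2)) => //.
  simpl in lowN, hMR |- *; nra.
have [hT [e1 [hP1 hP2]]] := ratio_facts rn mN.
have r3 : leq 3 rr by apply/leP; exact: hr3.
have hB := @per_n n rr mm (ceil_log n rr) r3 rn.
set k := ceil_log n rr in hT e1 hP1 hP2 hB.
have hlnx : 0 < ln x by rewrite -ln_1; apply: ln_increasing; lra.
have hk1 := ceil_log_pos n rr hlnx.
have hxe := ceil_log_exp n rr hx0.
rewrite -/x in hxe.
set F := INR (Factorial.fact (S k)) in hB.
have hF : 0 < F by apply: lt_0_INR; apply: Factorial.lt_O_fact.
have [hD hE] := hA k x y w Rr F hk1 hx0 hxe (conj hy0 hyK) hw hRpos erefl.
set tau := Rr ^ 6 * M ^ 2 / Nn ^ 3.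
have htau : y ^ 2 / x = tau by rewrite /tau /y /x; field; lra.
have htau0 : 0 <= tau by rewrite -htau; apply: aux_nonneg_div => //; apply: pow_le.
have hD' : (y ^ 2) ^ S k / F <= CD * tau.
  apply: (Rmult_le_reg_r F) => //.
  have -> : (y ^ 2) ^ S k / F * F = (y ^ 2) ^ S k by field; lra.
  by rewrite -htau.
have hE' : Nn * w ^ S k / F <= CE * tau.
  apply: (Rmult_le_reg_r F) => //.
  have -> : Nn * w ^ S k / F * F = x * Rr ^ 2 * w ^ S k by rewrite /x; field; lra.
  by rewrite -htau -hwy.
have hy2 : y ^ 2 <= K' ^ 2 by apply: pow_incr; lra.
have hS : tau + tau * y + tau * y ^ 2 + (y ^ 2) ^ (S k) / F + Nn * w ^ (S k) / F
          <= (1 + K' + K' ^ 2 + CD + CE) * tau.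
  have : tau * y <= tau * K' by apply: Rmult_le_compat_l.
  have : tau * y ^ 2 <= tau * K' ^ 2 by apply: Rmult_le_compat_l.
  lra.
have hB' : INR #|[set H in Hr n rr mm | ~~ good k k H]| <=
           INR (card_H n rr mm) * ((1 + K' + K' ^ 2 + CD + CE) * tau).
  apply: (Rle_trans _ _ _ hB); apply: Rmult_le_compat_l; first by apply: pos_INR.
  exact: hS.
split.
  apply: abs_ratio hT _ hB'; lra.
apply: abs_ratio hT _ hB'; rewrite e1; lra.
Qed.
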